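(* Let $L$ be a relational language containing infinitely many binary relation symbols and let $\mathbf H$ be a countable $L$-hypergraph (with vertex set $\omega$) universal for all countable $L$-hypergraphs. Then there exist an $L$-hypergraph $\mathbf A$ on three vertices and a colouring $c:\binom{\mathbf H}{\mathbf A}\to\omega$ such that for every tree-like embedding $f:\mathbf H\to\mathbf H$, $c$ attains every value in $\omega$ on the set of embeddings $\mathbf A\to\mathbf H$ whose image lies in $f[\omega]$.
   Context: Convention: every structure is countable, has vertex set some $n\in\omega$ or $\omega$ ordered naturally, embeddings are monotone (order-preserving) embeddings of $L$-structures; $\binom{\mathbf H}{\mathbf A}$ is the set of such embeddings $\mathbf A\to\mathbf H$. An $L$-hypergraph is an $L$-structure in which all relations are injective (no repeated vertices in tuples) and symmetric, and every tuple lies in at most one relation. For $X\subseteq\omega$, $\mathrm{tp}_{\mathbf H}(X)$ is the isomorphism type (respecting the order) of the substructure induced on $X$. An embedding $f:\mathbf H\to\mathbf H$ is tree-like if for every finite $X=\{x_0<\dots<x_m\}\subseteq\omega$, every $0\le i\le m$ and every $x>x_m$ there is $y>x_m$ with $\mathrm{tp}_{\mathbf H}(f[X]\cup\{f(y)\})=\mathrm{tp}_{\mathbf H}(X\cup\{x\})$ and $\mathrm{tp}_{\mathbf H}(\{0,\dots,f(x_0)-1,f(y)\})=\mathrm{tp}_{\mathbf H}(\{0,\dots,f(x_0)-1,f(x_i)\})$. *)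

(* Defs.v *)
From mathcomp Require Import all_boot.
Set Implicit Arguments. Unset Strict Implicit. Unset Printing Implicit Defensive.

Record language := Language { sym :> Type; arity : sym -> nat }.

(* A countable structure: vertex set is n (dom = Some n) or omega (dom = None),
   ordered naturally; rel s t says the tuple t (a list of vertices) is in R_s. *)
Record structure (L : language) := Structure {
  dom : option nat;
  rel : L -> seq nat -> Prop }.

Definition in_dom (d : option nat) (x : nat) : bool :=
  match d with Some n => x < n | None => true end.

Definition wf_structure L (A : structure L) : Prop :=
  forall s t, rel A s t -> size t = arity s /\ all (in_dom (dom A)) t.

Definition is_hypergraph L (A : structure L) : Prop :=
  wf_structure A /\
  (forall s t, rel A s t -> uniq t) /\
  (forall s t t', rel A s t -> perm_eq t t' -> rel A s t') /\
  (forall s s' t, rel A s t -> rel A s' t -> s = s').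

(* Monotone (order-preserving) embedding A -> B; only the values of f on dom A matter. *)
Definition is_emb L (A B : structure L) (f : nat -> nat) : Prop :=
  (forall x, in_dom (dom A) x -> in_dom (dom B) (f x)) /\
  (forall x y, in_dom (dom A) x -> in_dom (dom A) y -> x < y -> f x < f y) /\
  (forall s t, all (in_dom (dom A)) t -> (rel A s t <-> rel B s (map f t))).

Definition inf_binary (L : language) : Prop :=
  exists g : nat -> L, injective g /\ forall n, arity (g n) = 2.

Definition universal L (H : structure L) : Prop :=
  forall G : structure L, is_hypergraph G -> exists f, is_emb G H f.

Definition enum_set (X : seq nat) : seq nat := sort leq (undup X).

(* tp_H(X) = tp_H(Y) for finite X, Y : the order-preserving bijection between
   X and Y is an isomorphism of the induced substructures. *)
Definition same_tp L (H : structure L) (X Y : seq nat) : Prop :=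
  let X' := enum_set X in let Y' := enum_set Y in
  size X' = size Y' /\
  forall s (I : seq nat), all (fun i => i < size X') I ->
    (rel H s (map (nth 0 X') I) <-> rel H s (map (nth 0 Y') I)).

(* Tree-like embedding f : H -> H.  A finite set X = {x_0 < ... < x_m} is given
   as a nonempty strictly increasing list. *)
Definition tree_like L (H : structure L) (f : nat -> nat) : Prop :=
  forall (X : seq nat), X != [::] -> sorted ltn X ->
  forall i, i < size X ->
  forall x, last 0 X < x ->
  exists y, last 0 X < y /\
    same_tp H (map f X ++ [:: f y]) (X ++ [:: x]) /\
    same_tp H (iota 0 (f (head 0 X)) ++ [:: f y])
              (iota 0 (f (head 0 X)) ++ [:: f (nth 0 X i)]).

(* Main.v *)
Require Import Defs.
From mathcomp Require Import all_boot.
From Stdlib Require Import ClassicalEpsilon.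

Lemma es_sorted (s : seq nat) : sorted ltn s -> enum_set s = s.
Proof.
move=> hs; rewrite /enum_set.
move: hs; rewrite ltn_sorted_uniq_leq => /andP [hu hl].
by rewrite (undup_id hu) (sorted_sort leq_trans hl).
Qed.

Lemma sorted_iota_m a k m : a + k <= m -> sorted ltn (iota a k ++ [:: m]).
Proof.
elim: k a => [|k IH] a h /=.
  by [].
case: k IH h => [|k] IH h /=.
  by rewrite andbT; rewrite addn1 in h.
have := IH a.+1; rewrite /= => ->; last by rewrite addSnnS.
by rewrite ltnSn.
Qed.

Section Main.
Variables (L : language) (H : structure L) (g : nat -> L).
Hypothesis ginj : injective g.
Hypothesis Hhyp : is_hypergraph H.

Definition P (t : seq nat) (n : nat) : Prop :=
  exists d, (forall d', d' < d -> forall s, Defs.rel H s [:: d'; nth 0 t 0] <-> Defs.rel H s [:: d'; nth 0 t 2])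
    /\ Defs.rel H (g n) [:: d; nth 0 t 2] /\ ~ Defs.rel H (g n) [:: d; nth 0 t 0].

Lemma P_uniq t n m : P t n -> P t m -> n = m.
Proof.
move=> [d1 [h1 [a1 b1]]] [d2 [h2 [a2 b2]]].
case: (ltngtP d1 d2) => hd.
- by exfalso; apply: b1; apply/(h2 _ hd).
- by exfalso; apply: b2; apply/(h1 _ hd).
- subst d2. apply: ginj. case: Hhyp => _ [_ [_ U]]. exact: (U _ _ _ a1 a2).
Qed.

Definition col (t : seq nat) : nat := epsilon (inhabits 0) (P t).

Lemma col_P t n : P t n -> col t = n.
Proof.
move=> h. apply/esym/(P_uniq t n (col t) h). rewrite /col. apply: epsilon_spec. by exists n.
Qed.
End Main.

Definition A3 (L : language) : structure L := Structure (Some 3) (fun _ _ => False).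

Definition G4 (L : language) (s0 : L) : structure L :=
  Structure (Some 4) (fun s t => s = s0 /\ perm_eq t [:: 0; 3]).

Theorem corollary6p3 (L : language) (H : structure L) :
  inf_binary L ->
  dom H = None -> is_hypergraph H -> universal H ->
  exists (A : structure L) (c : seq nat -> nat),
    dom A = Some 3 /\ is_hypergraph A /\
    forall f : nat -> nat, is_emb H H f -> tree_like H f ->
    forall n : nat, exists e : nat -> nat,
      is_emb A H e /\ (forall i, i < 3 -> exists y, e i = f y) /\
      c (mkseq e 3) = n.
Proof.
move=> [g [ginj gar]] hdom hH huniv.
exists (A3 L), (@col L H g); split; first by [].
split.
  split; first by move=> s t [].
  by split; [move=> s t []|split; move=> s t; [move=> t' []|move=> t' []]].
move=> f [_ [fmon frel]] ftl n.
have hG : is_hypergraph (@G4 L (g n)).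
  split.
    move=> s t /= [-> hp]; split; first by rewrite (perm_size hp) gar.
    apply/allP => x; rewrite (perm_mem hp) !inE => /orP [] /eqP -> //.
  split; first by move=> s t /= [_ hp]; rewrite (perm_uniq hp).
  split; first by move=> s t t' /= [-> hp] hp'; split=> //; apply: perm_trans hp; by rewrite perm_sym.
  by move=> s s' t /= [-> _] [-> _].
have [h [_ [hmon hrel]]] := huniv _ hG.
set u := h 0; set v := h 1; set z := h 2; set w := h 3.
have uv : u < v by apply: hmon.
have vz : v < z by apply: hmon.
have zw : z < w by apply: hmon.
have fm : forall a b, a < b -> f a < f b by move=> a b; apply: fmon; rewrite hdom.
have hs : sorted ltn [:: u; v; z] by rewrite /= uv vz.
have [y [zy [tp1 tp2]]] := ftl [:: u; v; z] isT hs 1 isT w zw.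
rewrite /= in tp1 tp2.
have yv : v < y by apply: ltn_trans zy.
move: tp1; rewrite /same_tp /=; rewrite (@es_sorted ([:: f u; f v; f z; f y])); last by rewrite /= !fm.
rewrite (@es_sorted ([:: u; v; z; w])); last by rewrite /= uv vz zw.
move=> [_ tp1].
move: tp2; rewrite /same_tp /=; rewrite (@es_sorted (iota 0 (f u) ++ [:: f y])); last first.
  by apply: sorted_iota_m; rewrite add0n ltnW // (ltn_trans (fm _ _ uv)) // fm.
rewrite (@es_sorted (iota 0 (f u) ++ [:: f v])); last first.
  by apply: sorted_iota_m; rewrite add0n ltnW // fm.
move=> [_ tp2].
have hrelH : forall s I, all (fun i => i < 4) I ->
    Defs.rel H s (map (nth 0 [:: u; v; z; w]) I) <-> (s = g n /\ perm_eq I [:: 0; 3]).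
  move=> s I hI.
  have -> : map (nth 0 [:: u; v; z; w]) I = map h I.
    apply/eq_in_map => i /(allP hI); rewrite /u /v /z /w.
    by case: i => [|[|[|[|i]]]].
  by split => [/(hrel s I hI) | /(hrel s I hI)].
exists (fun i => nth 0 [:: f v; f z; f y] i).
split.
  split; first by move=> x _; rewrite hdom.
  split.
    move=> a b ha hb hab. case: a b ha hb hab => [|[|[|a]]] [|[|[|b]]] //= _ _ _;
      rewrite !fm // (ltn_trans vz) //.
  move=> s t ht; split => //= hr.
  have := (tp1 s (map S t)).
  have hI : all (fun i => i < 4) (map S t).
    by rewrite all_map; apply/allP => i /(allP ht).
  move=> /(_ hI) [hl _].
  have e1 : map (nth 0 [:: f u; f v; f z; f y]) (map S t) = map (nth 0 [:: f v; f z; f y]) t.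
    by rewrite -map_comp.
  rewrite e1 in hl.
  have [_ hp] := (hrelH s _ hI).1 (hl hr).
  have := perm_mem hp 0; rewrite !inE /=.
  by have -> : (0 \in map S t) = false by apply/negP => /mapP [? _].
split.
  by move=> [|[|[|i]]] // _; [exists v|exists z|exists y].
apply: (@col_P L H g ginj hH).
exists (f u); rewrite /=.
split.
  move=> d' hd s.
  have hI : all (fun i => i < size (iota 0 (f u) ++ [:: f y])) [:: d'; f u].
    by rewrite /= size_cat size_iota addn1 ltnS ltnW // ltnSn.
  have := tp2 s _ hI.
  rewrite /= !nth_cat !size_iota hd ltnn subnn /= nth_iota // add0n.
  by move=> ->.
split.
  have := (tp1 (g n) [:: 0; 3] isT).2. rewrite /=; apply; apply/(hrelH (g n) [:: 0; 3] isT); by split.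
move=> hr.
have : Defs.rel H (g n) [:: u; v].
  by apply/(frel (g n) [:: u; v]); [rewrite hdom|].
move=> /(hrelH (g n) [:: 0; 1] isT) [_].
by [].
Qed.
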